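(* Let $n\geq 1$ and $k\ge 2$, and let $u$ be a word over $\Sigma_k$ of length at most $n$. Then $B_k(u,n)$ can be computed in $O(n^2)$ time using $O(n)$ space, under the unit-cost RAM model.
   Context: $\Sigma_k=\{1,2,\ldots,k\}$. A border of a word $w$ is a word that is both a non-empty proper prefix and a non-empty proper suffix of $w$; $w$ is bordered if it has a border. $B_k(u,n)$ denotes the number of length-$n$ bordered words over $\Sigma_k$ having $u$ as a prefix. Unit-cost RAM model: integer variables use constant space and integer arithmetic operations take constant time. *)

(* Defs.v *)
From Stdlib Require Import ZArith.
From mathcomp Require Import all_boot.

Set Implicit Arguments.
Unset Strict Implicit.
Unset Printing Implicit Defensive.

(* Words over Sigma_k = {1,...,k}, represented as seq nat.             *)

Definition is_border (v w : seq nat) : bool :=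
  [&& 0 < size v, size v < size w, prefix v w & suffix v w].

(* w is bordered iff it has a border; a border is determined by its length. *)
Definition bordered (w : seq nat) : bool :=
  has (fun m => is_border (take m w) w) (iota 1 (size w)).

Definition word_of (k n : nat) (t : n.-tuple 'I_k) : seq nat :=
  map (fun i : 'I_k => (nat_of_ord i).+1) t.

Definition B (k : nat) (u : seq nat) (n : nat) : nat :=
  #|[pred t : n.-tuple 'I_k | prefix u (word_of t) && bordered (word_of t)]|.

(* Each executed instruction costs 1 time unit; every arithmetic       *)
(* operation on integers is a single instruction.                      *)
(* Space used = 1 + max |address| of any register ever accessed        *)
(* (input registers included).                                         *)

Inductive instr : Type :=
  | IConst (d : nat) (c : Z)            (* R[d] := c *)
  | IAdd (d a b : nat)                  (* R[d] := R[a] + R[b] *)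
  | ISub (d a b : nat)                  (* R[d] := R[a] - R[b] *)
  | IMul (d a b : nat)                  (* R[d] := R[a] * R[b] *)
  | IDiv (d a b : nat)                  (* R[d] := R[a] / R[b] (Z.div) *)
  | IMod (d a b : nat)                  (* R[d] := R[a] mod R[b] (Z.modulo) *)
  | ILoad (d a : nat)                   (* R[d] := R[R[a]] *)
  | IStore (a s : nat)                  (* R[R[a]] := R[s] *)
  | IJz (r : nat) (l : nat)             (* if R[r] = 0 then goto l *)
  | IJlt (a b : nat) (l : nat)          (* if R[a] < R[b] then goto l *)
  | IJmp (l : nat)                      (* goto l *)
  | IHalt.

Definition program := seq instr.

Record config := Config { cpc : nat; cmem : Z -> Z; cused : nat }.

Definition upd (m : Z -> Z) (a : Z) (v : Z) : Z -> Z :=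
  fun x => if Z.eqb x a then v else m x.

Definition sz (a : Z) : nat := (Z.abs_nat a).+1.

Definition touch (u : nat) (addrs : seq Z) : nat :=
  foldr (fun a acc => maxn (sz a) acc) u addrs.

(* One step; None means the machine has halted (Halt or pc out of range). *)
Definition step (P : program) (c : config) : option config :=
  let m := cmem c in
  let nx := (cpc c).+1 in
  let R (i : nat) := m (Z.of_nat i) in
  let arith d a b (f : Z -> Z -> Z) :=
    Some (Config nx (upd m (Z.of_nat d) (f (R a) (R b)))
                 (touch (cused c) [:: Z.of_nat d; Z.of_nat a; Z.of_nat b])) in
  if cpc c < size P then
  match nth IHalt P (cpc c) with
  | IConst d v => Some (Config nx (upd m (Z.of_nat d) v) (touch (cused c) [:: Z.of_nat d]))
  | IAdd d a b => arith d a b Z.add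
  | ISub d a b => arith d a b Z.sub
  | IMul d a b => arith d a b Z.mul
  | IDiv d a b => arith d a b Z.div
  | IMod d a b => arith d a b Z.modulo
  | ILoad d a => Some (Config nx (upd m (Z.of_nat d) (m (R a)))
                        (touch (cused c) [:: Z.of_nat d; Z.of_nat a; R a]))
  | IStore a s => Some (Config nx (upd m (R a) (R s))
                         (touch (cused c) [:: Z.of_nat a; Z.of_nat s; R a]))
  | IJz r l => Some (Config (if Z.eqb (R r) 0 then l else nx) m
                       (touch (cused c) [:: Z.of_nat r]))
  | IJlt a b l => Some (Config (if Z.ltb (R a) (R b) then l else nx) m
                          (touch (cused c) [:: Z.of_nat a; Z.of_nat b]))
  | IJmp l => Some (Config l m (cused c))
  | IHalt => None
  end
  else None.

(* run P t c = Some c' iff the machine started in c halts within t steps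
   (counting the final halting check), ending in configuration c'. *)
Fixpoint run (P : program) (t : nat) (c : config) : option config :=
  match t with
  | 0 => None
  | t'.+1 => match step P c with
             | None => Some c
             | Some c' => run P t' c'
             end
  end.

(* Input encoding: R[0] = k, R[1] = n, R[2] = |u|, R[3+i] = u_i (i < |u|),
   all other registers 0. The input registers count as used space. *)
Definition init_mem (k n : nat) (u : seq nat) : Z -> Z :=
  fun x =>
    if Z.eqb x 0 then Z.of_nat k
    else if Z.eqb x 1 then Z.of_nat n
    else if Z.eqb x 2 then Z.of_nat (size u)
    else if Z.leb 3 x && Z.ltb x (3 + Z.of_nat (size u)) then
      Z.of_nat (nth 0 u (Z.to_nat (x - 3)))
    else 0%Z.

Definition init_config (k n : nat) (u : seq nat) : config :=
  Config 0 (init_mem k n u) (size u + 3).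

(* Main.v *)
Require Import Defs.
From Stdlib Require Import ZArith Lia.
From mathcomp Require Import all_boot.
From mathcomp Require Import zify.
Set Implicit Arguments.
Unset Strict Implicit.
Unset Printing Implicit Defensive.

Fixpoint words (k n : nat) : seq (seq nat) :=
  if n is n'.+1 then [seq a :: w | a <- iota 1 k, w <- words k n'] else [:: [::]].

Definition valid k (w : seq nat) := all (fun a => (1 <= a) && (a <= k)) w.

Lemma mem_words k n w : (w \in words k n) = (size w == n) && valid k w.
Proof.
elim: n w => [|n IH] [|a w] //=.
  by apply/allpairsP => -[[b v] [_ _]].
apply/allpairsP/idP.
  move=> [[b v] /= [Hb Hv [-> ->]]].
  move: Hv; rewrite IH => /andP[/eqP -> ->].
  by move: Hb; rewrite mem_iota; case/andP => -> /=; lia.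
move=> /andP [Hs /andP[Ha Hw]]; exists (a, w); split => //=.
  by rewrite mem_iota; lia.
by rewrite IH -eqSS Hs.
Qed.

Lemma uniq_words k n : uniq (words k n).
Proof.
elim: n => [|n IH] //=.
apply: allpairs_uniq => //; first exact: iota_uniq.
by move=> [a1 w1] [a2 w2] _ _ /= [-> ->].
Qed.

Lemma size_words k n : size (words k n) = k ^ n.
Proof. elim: n => [|n IH] //=; by rewrite size_allpairs size_iota IH expnS. Qed.

Lemma sum_words_cat k (F : seq nat -> nat) a b :
  \sum_(w <- words k (a + b)) F w =
  \sum_(x <- words k a) \sum_(y <- words k b) F (x ++ y).
Proof.
elim: a F => [|a IH] F /=; first by rewrite big_seq1.
rewrite !big_allpairs_dep; apply: eq_bigr => c _.
by rewrite IH.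
Qed.

Lemma count_sum (T : Type) (P : pred T) s : count P s = \sum_(x <- s) (P x : nat).
Proof. by elim: s => [|x s IH]; rewrite ?big_nil ?big_cons //= IH. Qed.

Lemma sum_eq_word k n v (F : seq nat -> nat) :
  v \in words k n -> \sum_(w <- words k n) (v == w) * F w = F v.
Proof.
move=> Hv.
rewrite (bigD1_seq v) //=; last exact: uniq_words.
rewrite eqxx mul1n big1 ?addn0 // => w /negbTE; rewrite eq_sym => ->; by [].
Qed.

Lemma count_prefix k q a : valid k q -> size q <= a ->
  \sum_(w <- words k a) (prefix q w : nat) = k ^ (a - size q).
Proof.
move=> Hq Ha.
have -> : a = size q + (a - size q) by lia.
rewrite sum_words_cat addKn.
set r := a - size q.
rewrite -(@sum_eq_word k (size q) q (fun _ => k ^ r)); last by rewrite mem_words eqxx Hq.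
apply: eq_big_seq => x; rewrite mem_words => /andP[/eqP Hx _].
have E: forall y, prefix q (x ++ y) = (q == x).
  by move=> y; rewrite prefixE take_size_cat ?Hx // eq_sym.
under eq_bigr do rewrite E.
by rewrite big_const_seq count_predT size_words iter_addn_0 mulnC.
Qed.

Definition brd m (w : seq nat) :=
  (0 < m < size w) && all (fun i => nth 0 w i == nth 0 w (i + (size w - m))) (iota 0 m).

Lemma brdP m w : reflect ((0 < m < size w) /\ forall i, i < m -> nth 0 w i = nth 0 w (i + (size w - m))) (brd m w).
Proof.
apply: (iffP andP) => -[H1 H2]; split => //.
  by move=> i Hi; apply/eqP; move/allP: H2; apply; rewrite mem_iota.
by apply/allP => i; rewrite mem_iota => /andP[_ Hi]; apply/eqP; apply: H2.
Qed.

Lemma brd_take_drop m w : 0 < m < size w -> brd m w = (take m w == drop (size w - m) w).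
Proof.
move=> Hm; apply/brdP/eqP.
  move=> [_ H]; apply: (@eq_from_nth _ 0).
    by rewrite size_take_min size_drop; lia.
  move=> i; rewrite size_take_min => Hi.
  rewrite nth_take; last by lia.
  rewrite nth_drop (H i); last by lia.
  congr nth; lia.
move=> E; split => // i Hi.
have := congr1 (fun s => nth 0 s i) E => /=.
by rewrite nth_take // nth_drop addnC.
Qed.

Lemma bordered_brd w : bordered w = has (fun m => brd m w) (iota 1 (size w)).
Proof.
rewrite /bordered; apply: eq_in_has => m; rewrite mem_iota => Hm.
rewrite /is_border size_take_min.
case: (ltnP m (size w)) => Hlt.
  rewrite brd_take_drop; last by lia.
  rewrite prefix_take suffixE size_take_min (_ : minn m (size w) = m); last by lia.
  rewrite eq_sym (_ : 0 < m); last by lia.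
  by rewrite (_ : m < size w) //.
rewrite /brd; have -> : m < size w = false by lia.
by rewrite andbF ltnn andbF.
Qed.

Lemma brd_bordered m w : brd m w -> bordered w.
Proof.
move=> H; rewrite bordered_brd; apply/hasP; exists m => //.
by case/brdP: H => Hm _; rewrite mem_iota; lia.
Qed.

Lemma borderedP w : reflect (exists m, brd m w) (bordered w).
Proof.
rewrite bordered_brd; apply: (iffP hasP) => [[m _ H]|[m H]]; first by exists m.
by exists m => //; case/brdP: H => Hm _; rewrite mem_iota; lia.
Qed.

Lemma brd_trans m b w : brd m w -> brd b (take m w) -> brd b w.
Proof.
move=> /brdP [Hm H1] /brdP [Hb H2]; rewrite size_take_min in Hb H2.
have Em : minn m (size w) = m by lia.
rewrite Em in Hb H2.
apply/brdP; split; first by lia.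
move=> i Hi.
have := H2 i Hi; rewrite !nth_take; [|lia|lia] => ->.
rewrite H1; last by lia.
congr nth; lia.
Qed.

Lemma brd_sub i j w : brd i w -> brd j w -> 0 < i < j -> brd i (take j w).
Proof.
move=> /brdP [Hi H1] /brdP [Hj H2] Hij.
have Ej : minn j (size w) = j by lia.
apply/brdP; rewrite size_take_min Ej; split; first by lia.
move=> t Ht.
rewrite !nth_take; [|lia|lia].
rewrite (H1 t) // (H2 (t + (j - i))); last by lia.
congr nth; lia.
Qed.

Definition shb j (w : seq nat) :=
  ~~ bordered (take j w) && (take j w == drop (size w - j) w).

Lemma shb_brd j w : 0 < j -> 2 * j <= size w -> shb j w = ~~ bordered (take j w) && brd j w.
Proof. by move=> H1 H2; rewrite /shb brd_take_drop //; lia. Qed.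

Lemma bordered_short w : bordered w ->
  exists j, [/\ 0 < j, 2 * j <= size w, ~~ bordered (take j w) & brd j w].
Proof.
move/borderedP => Hex.
case: (ex_minnP Hex) => m Hm Hmin.
have [Hm0 _] := brdP _ _ Hm.
have NB : ~~ bordered (take m w).
  apply/negP => /borderedP [b Hb].
  have := brd_trans Hm Hb => /Hmin.
  case/brdP: Hb => Hb _; rewrite size_take_min in Hb; lia.
exists m; split => //; first by lia.
case: (leqP (2 * m) (size w)) => // Hlt.
case/negP: NB; apply/borderedP; exists (2 * m - size w).
case/brdP: Hm => _ H.
apply/brdP; rewrite size_take_min.
have Em : minn m (size w) = m by lia.
rewrite Em; split; first by lia.
move=> i Hi; rewrite !nth_take; [|lia|lia].
rewrite H; last by lia.
congr nth; lia.
Qed.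

Lemma bordered_sum w : (bordered w : nat) = \sum_(j <- iota 1 (size w)./2) (shb j w : nat).
Proof.
case: (boolP (bordered w)) => Hb.
  case: (bordered_short Hb) => j [Hj0 Hj2 NB Hj].
  rewrite (bigD1_seq j) /=; [|by rewrite mem_iota; lia|exact: iota_uniq].
  rewrite shb_brd // NB Hj big1_seq //.
  move=> i /andP [Hij]; rewrite mem_iota => Hi.
  rewrite shb_brd; [|lia|lia].
  case: (boolP (brd i w)) => Hbi; rewrite ?andbF //.
  case: (ltngtP i j) => Hc.
  - by case/negP: NB; apply: brd_bordered (brd_sub Hbi Hj _); lia.
  - by rewrite (brd_bordered (brd_sub Hj Hbi _)) //; lia.
  - by rewrite Hc eqxx in Hij.
rewrite big1_seq // => j /andP[_]; rewrite mem_iota => Hj.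
rewrite shb_brd; [|lia|lia].
case: (boolP (brd j w)) => H; rewrite ?andbF //.
by rewrite (brd_bordered H) in Hb.
Qed.

Lemma prefix_cat (p s t : seq nat) : prefix p (s ++ t) =
  if size p <= size s then prefix p s
  else (take (size s) p == s) && prefix (drop (size s) p) t.
Proof.
elim: s p => [|a s IH] [|b p] //=.
  by case: t.
rewrite IH ltnS eqseq_cons.
by case: ifP => _; rewrite ?andbA.
Qed.

Definition Bw k p n := \sum_(w <- words k n) (prefix p w && bordered w : nat).
Definition Uw k p n := \sum_(w <- words k n) (prefix p w && ~~ bordered w : nat).

Lemma Bw_sum k p n : Bw k p n =
  \sum_(j <- iota 1 n./2) \sum_(w <- words k n) (prefix p w && shb j w : nat).
Proof.
rewrite /Bw exchange_big /=.
apply: eq_big_seq => w; rewrite mem_words => /andP[/eqP Hw _].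
rewrite -Hw (_ : (prefix p w && bordered w : nat) = prefix p w * bordered w); last by case: (prefix p w); case: (bordered w).
rewrite bordered_sum big_distrr /=; apply: eq_bigr => j _.
by case: prefix; case: shb.
Qed.

Lemma Uw_Bw k p n : valid k p -> size p <= n -> Uw k p n = k ^ (n - size p) - Bw k p n.
Proof.
move=> Hp Hn.
rewrite -count_prefix // /Uw /Bw.
have -> : \sum_(w <- words k n) (prefix p w : nat) =
   \sum_(w <- words k n) (prefix p w && bordered w : nat) + \sum_(w <- words k n) (prefix p w && ~~ bordered w : nat).
  by rewrite -big_split; apply: eq_bigr => w _; case: (prefix p w); case: (bordered w).
by rewrite addKn.
Qed.

Lemma Bw_le k p n : valid k p -> size p <= n -> Bw k p n <= k ^ (n - size p).
Proof.
move=> Hp Hn; rewrite -count_prefix // /Bw.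
by apply: leq_sum => w _; case: (prefix p w); case: (bordered w).
Qed.

Lemma valid_take k j p : valid k p -> valid k (take j p).
Proof. by rewrite /valid -{1}(cat_take_drop j p) all_cat => /andP[]. Qed.
Lemma valid_drop k j p : valid k p -> valid k (drop j p).
Proof. by rewrite /valid -{1}(cat_take_drop j p) all_cat => /andP[]. Qed.

Lemma sum_const_words k n c : \sum_(w <- words k n) c = c * k ^ n.
Proof. by rewrite big_const_seq count_predT size_words iter_addn_0 mulnC. Qed.

Lemma Cj k p n j : valid k p -> size p <= n -> 0 < j -> 2 * j <= n ->
 \sum_(w <- words k n) (prefix p w && shb j w : nat) =
 if size p <= j then Uw k p j * k ^ (n - 2 * j)
 else if size p <= n - j then (~~ bordered (take j p) : nat) * k ^ (n - j - size p)
 else (~~ bordered (take j p) && prefix (drop (n - j) p) (take j p) : nat).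
Proof.
move=> Hp Hn Hj0 Hj2.
have En : n = j + ((n - 2 * j) + j) by lia.
rewrite {1}En sum_words_cat.
transitivity (\sum_(v <- words k j) \sum_(x <- words k (n - 2 * j))
                (prefix p (v ++ x ++ v) && ~~ bordered v : nat)).
  apply: eq_big_seq => v; rewrite mem_words => /andP[/eqP Hv Vv].
  rewrite sum_words_cat; apply: eq_big_seq => x; rewrite mem_words => /andP[/eqP Hx _].
  rewrite -(@sum_eq_word k j v (fun v' => (prefix p (v ++ x ++ v') && ~~ bordered v : nat))); last by rewrite mem_words Hv eqxx.
  apply: eq_big_seq => v'; rewrite mem_words => /andP[/eqP Hv' _].
  rewrite /shb take_size_cat // catA size_cat !size_cat Hv Hx Hv'.
  rewrite (_ : j + (n - 2 * j) + j - j = size (v ++ x)); last by rewrite size_cat Hv Hx; lia.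
  rewrite drop_size_cat //.
  by case: eqP => [<-|_]; case: (prefix _ _); case: (bordered v).
have Vt : valid k (take j p) by exact: valid_take.
have Vd : valid k (drop j p) by exact: valid_drop.
case: ifP => H1.
  rewrite /Uw big_distrl /=; apply: eq_big_seq => v; rewrite mem_words => /andP[/eqP Hv _].
  rewrite -sum_const_words; apply: eq_bigr => x _.
  by rewrite prefix_cat Hv H1.
transitivity (\sum_(v <- words k j) (take j p == v) *
   \sum_(x <- words k (n - 2 * j)) (prefix (drop j p) (x ++ v) && ~~ bordered v : nat)).
  apply: eq_big_seq => v; rewrite mem_words => /andP[/eqP Hv _].
  rewrite big_distrr; apply: eq_bigr => x _ /=.
  rewrite prefix_cat Hv H1.
  by case: eqP; case: prefix; case: bordered.
have H1' : j < size p by rewrite ltnNge H1.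
rewrite sum_eq_word; last first.
rewrite mem_words Vt size_take_min andbT; apply/eqP/minn_idPl/ltnW.
exact: H1'.
have Hsd : size (drop j p) = size p - j by rewrite size_drop.
case: ifP => H2.
  have H2' : size p <= n - j by rewrite H2.
  transitivity (\sum_(x <- words k (n - 2 * j)) (prefix (drop j p) x : nat) * (~~ bordered (take j p))).
    apply: eq_big_seq => x; rewrite mem_words => /andP[/eqP Hx _].
    rewrite prefix_cat Hx Hsd (_ : size p - j <= n - 2 * j); last by lia.
    by case: prefix; case: bordered.
  rewrite -big_distrl /= count_prefix // ?Hsd; last by lia.
  by rewrite mulnC; congr (_ * k ^ _); lia.
have H2' : n - j < size p by rewrite ltnNge H2.
transitivity (\sum_(x <- words k (n - 2 * j)) (take (n - 2 * j) (drop j p) == x) *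
   (prefix (drop (n - j) p) (take j p) && ~~ bordered (take j p) : nat)).
  apply: eq_big_seq => x; rewrite mem_words => /andP[/eqP Hx _].
  rewrite prefix_cat Hx Hsd (_ : size p - j <= n - 2 * j = false); last by lia.
  rewrite drop_drop (_ : n - 2 * j + j = n - j); last by lia.
  by case: eqP; case: prefix; case: bordered.
rewrite sum_eq_word; last first.
  rewrite mem_words valid_take // size_take_min Hsd andbT; apply/eqP. lia.
by rewrite andbC.
Qed.

Lemma word_of_inj k n : injective (@word_of k n).
Proof.
move=> t1 t2 /inj_map E; apply: val_inj; apply: E.
by move=> a b [] /val_inj.
Qed.

Lemma B_Bw k u n : 0 < k -> B k u n = Bw k u n.
Proof.
move=> Hk.
rewrite /B cardE /enum_mem size_filter /Bw -count_sum.
rewrite (@eq_count _ _ (preim (@word_of k n) (fun w => prefix u w && bordered w))) // -count_map.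
apply/permP; apply: uniq_perm.
- by rewrite map_inj_uniq -?enumT ?enum_uniq //; exact: word_of_inj.
- exact: uniq_words.
move=> w; rewrite mem_words; apply/mapP/idP.
  move=> [t _ ->]; rewrite /word_of size_map size_tuple eqxx /=.
  by apply/allP => a /mapP [i _ ->] /=; rewrite ltn_ord.
case: k Hk => // k' _ /andP [/eqP Hs Hv].
have Hs' : size (map (fun a => (inord a.-1 : 'I_k'.+1)) w) == n by rewrite size_map Hs.
exists (Tuple Hs'); first by rewrite -enumT mem_enum.
rewrite /word_of /= -map_comp -{1}(map_id w); apply/eq_in_map => a Ha /=.
move/allP: Hv => /(_ a Ha) /andP[H1 H2].
rewrite inordK; lia.
Qed.

Lemma prefix_nth (a b : seq nat) : prefix a b =
  (size a <= size b) && all (fun i => nth 0 a i == nth 0 b i) (iota 0 (size a)).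
Proof.
rewrite prefixE; case: leqP => Hs /=.
  apply/eqP/allP.
    move=> E i; rewrite mem_iota => /andP[_ Hi] /=.
    by rewrite -{1}E nth_take.
  move=> H; apply: (@eq_from_nth _ 0); first by rewrite size_takel.
  move=> i; rewrite size_takel // => Hi.
  rewrite nth_take //; apply/esym/eqP; apply: H; rewrite mem_iota; lia.
apply/negbTE/eqP => E.
have := congr1 size E; rewrite size_take_min => /minn_idPl.
by rewrite leqNgt Hs.
Qed.

Lemma Uw_full k q : valid k q -> Uw k q (size q) = ~~ bordered q.
Proof.
move=> Hq; rewrite /Uw.
rewrite -(@sum_eq_word k (size q) q (fun w => (~~ bordered w : nat))); last by rewrite mem_words eqxx.
apply: eq_big_seq => w; rewrite mem_words => /andP[/eqP Hw _].
rewrite prefixE -Hw take_size eq_sym.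
by case: (q == w); case: (bordered w).
Qed.

Definition Gm k u m := Bw k (take m u) m.
Definition Hm k u m := k ^ (m - minn m (size u)) - Gm k u m.

Lemma Hm_Uw k u m : valid k u -> Hm k u m = Uw k (take m u) m.
Proof.
move=> Hu; rewrite /Hm /Gm Uw_Bw ?valid_take ?size_take_min //; lia.
Qed.

Lemma Gm_le k u m : valid k u -> Gm k u m <= k ^ (m - minn m (size u)).
Proof. move=> Hu; rewrite /Gm -size_take_min; apply: Bw_le; rewrite ?valid_take ?size_take_min //; lia. Qed.

Definition ovl (u : seq nat) d c := all (fun i => nth 0 u i == nth 0 u (d + i)) (iota 0 c).

Definition term k u m j :=
  let L' := minn m (size u) in
  if L' <= j then Hm k u j * k ^ (m - 2 * j)
  else if L' <= m - j then Hm k u j * k ^ (m - j - L')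
  else if ovl u (m - j) (L' - (m - j)) then Hm k u j else 0.

Lemma G_rec k u m : valid k u -> Gm k u m = \sum_(j <- iota 1 m./2) term k u m j.
Proof.
move=> Hu; rewrite /Gm Bw_sum; apply: eq_big_seq => j; rewrite mem_iota => Hj.
have Hj0 : 0 < j by lia.
have Hj2 : 2 * j <= m by lia.
have Vt : valid k (take m u) by exact: valid_take.
have Ht : size (take m u) = minn m (size u) by rewrite size_take_min.
have HL1 : minn m (size u) <= m by apply: geq_minl.
have HL2 : minn m (size u) <= size u by apply: geq_minr.
have HL3 : (minn m (size u) = m) \/ (minn m (size u) = size u).
  by rewrite /minn; case: ifP => _; [left|right].
rewrite (Cj Vt _ Hj0 Hj2); last by rewrite Ht.
rewrite Ht.
rewrite /term /=.
move: Ht HL1 HL2 HL3; move: (minn m (size u)) => L' Ht HL1 HL2 HL3.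
case: ifP => H1.
  rewrite Hm_Uw //; congr (Uw k _ j * _).
  have Hs : size u <= j by lia.
  rewrite (@take_oversize _ m u) ?(@take_oversize _ j u) //; lia.
have H1' : j < L' by rewrite ltnNge H1.
have Tj : take j (take m u) = take j u by rewrite take_takel //; lia.
have HjH : Hm k u j = ~~ bordered (take j u).
  have Hsz : size (take j u) = j by rewrite size_takel //; lia.
  by rewrite Hm_Uw // -{2}Hsz Uw_full // valid_take.
rewrite Tj HjH.
case: ifP => // H2.
have H2' : m - j < L' by rewrite ltnNge H2.
have Hsj : size (take j u) = j by rewrite size_takel //; lia.
have Hle : L' - (m - j) <= j by lia.
rewrite prefix_nth size_drop Ht Hsj Hle /= /ovl.
have -> : all (fun i => nth 0 (drop (m - j) (take m u)) i == nth 0 (take j u) i) (iota 0 (L' - (m - j)))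
        = all (fun i => nth 0 u i == nth 0 u (m - j + i)) (iota 0 (L' - (m - j))).
  apply: eq_in_all => i; rewrite mem_iota => /andP[_ Hi].
  rewrite nth_drop nth_take; last by lia.
  rewrite nth_take; last by lia.
  by rewrite eq_sym.
by case: (bordered _); case: (all _ _).
Qed.

Lemma B_Gm k u n : 0 < k -> size u <= n -> B k u n = Gm k u n.
Proof. by move=> Hk Hn; rewrite B_Bw // /Gm take_oversize. Qed.

Fixpoint lcp (a b : seq nat) : nat :=
  match a, b with
  | x :: a', y :: b' => if x == y then (lcp a' b').+1 else 0
  | _, _ => 0
  end.

Lemma lcp_geP a b c : c <= lcp a b <->
  (c <= size a /\ c <= size b /\ forall i, i < c -> nth 0 a i = nth 0 b i).
Proof.
elim: a b c => [|x a IH] b c.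
  split; first by rewrite leqn0 => /eqP ->; split => //; split => //.
  by case=> H _.
case: b => [|y b].
  split; first by rewrite leqn0 => /eqP ->; split => //; split => //.
  by case=> _ [H _].
case: c => [|c].
  by split => // _; split => //; split => //.
rewrite /=; case: eqP => [<-|Hne].
  rewrite ltnS IH; split.
    move=> [H1 [H2 H3]]; split => //; split => //.
    by case=> [|i] //= Hi; apply: H3.
  move=> [H1 [H2 H3]]; split => //; split => //.
  by move=> i Hi; apply: (H3 i.+1).
split => // -[_ [_ H]].
by case: Hne; apply: (H 0).
Qed.

Lemma lcp_size a b : lcp a b <= size b.
Proof. by have [_ [H _]] := (proj1 (lcp_geP a b (lcp a b))) (leqnn _). Qed.

Lemma ovl_lcp u d c : c <= size u - d -> ovl u d c = (c <= lcp u (drop d u)).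
Proof.
move=> Hc; apply/idP/idP.
  move/allP => H; apply/lcp_geP; split; first lia.
  split; first by rewrite size_drop.
  move=> i Hi; rewrite nth_drop; apply/eqP; apply: H; rewrite mem_iota; lia.
move/lcp_geP => [_ [_ H]]; apply/allP => i; rewrite mem_iota => /andP[_ Hi].
by rewrite H // nth_drop.
Qed.

Lemma lcp_step u d z : z <= lcp u (drop d u) -> d + z < size u ->
  nth 0 u z = nth 0 u (d + z) -> z.+1 <= lcp u (drop d u).
Proof.
move=> /lcp_geP [H1 [H2 H3]] Hdz He; apply/lcp_geP; split; first lia.
split; first by rewrite size_drop; lia.
move=> i Hi; case: (ltngtP i z) => Hc; first exact: H3.
  lia.
by rewrite Hc He nth_drop.
Qed.

Lemma lcp_end1 u d z : z <= lcp u (drop d u) -> d + z = size u -> lcp u (drop d u) = z.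
Proof. move=> H1 H2; have := lcp_size u (drop d u); rewrite size_drop; lia. Qed.

Lemma lcp_end2 u d z : z <= lcp u (drop d u) -> d + z < size u ->
  nth 0 u z <> nth 0 u (d + z) -> lcp u (drop d u) = z.
Proof.
move=> H1 H2 H3; apply/eqP; rewrite eqn_leq H1 andbT leqNgt; apply/negP => /lcp_geP [_ [_ H]].
by case: H3; rewrite H // nth_drop.
Qed.

Arguments touch : simpl never.

Section Exec.
Variable P : program.

Fixpoint exec t c : option config :=
  match t with
  | 0 => Some c
  | t'.+1 => if step P c is Some c' then exec t' c' else None
  end.

Definition runs c T (Q : config -> Prop) :=
  exists t c', t <= T /\ exec t c = Some c' /\ Q c'.

Lemma runs_done c T (Q : config -> Prop) : Q c -> runs c T Q.
Proof. by move=> H; exists 0, c. Qed.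

Lemma runs_step c c' T Q : step P c = Some c' -> runs c' T Q -> runs c T.+1 Q.
Proof. by move=> Hs [t [c'' [Ht [He HQ]]]]; exists t.+1, c''; rewrite /= Hs. Qed.

Lemma runs_mono c T T' Q : T <= T' -> runs c T Q -> runs c T' Q.
Proof. move=> HT [t [c' [Ht H]]]; exists t, c'; split=> //; exact: leq_trans HT. Qed.

Lemma runs_impl c T (Q Q' : config -> Prop) : (forall c, Q c -> Q' c) -> runs c T Q -> runs c T Q'.
Proof. by move=> HQ [t [c' [Ht [He H]]]]; exists t, c'; split => //; split => //; apply: HQ. Qed.

Lemma exec_add a b c c1 : exec a c = Some c1 -> exec (a + b) c = exec b c1.
Proof.
elim: a c => [|a IH] c /=; first by case=> ->.
by case: (step P c) => // c'; apply: IH.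
Qed.

Lemma runs_seq c T1 T2 (Q1 Q2 : config -> Prop) :
  runs c T1 Q1 -> (forall c', Q1 c' -> runs c' T2 Q2) -> runs c (T1 + T2) Q2.
Proof.
move=> [t1 [c1 [H1 [E1 Q1c]]]] H.
have [t2 [c2 [H2 [E2 Q2c]]]] := H c1 Q1c.
exists (t1 + t2), c2; split; first by rewrite leq_add.
by rewrite (exec_add _ E1).
Qed.

Lemma runs_loop (I : nat -> config -> Prop) (Q : config -> Prop) b e :
  (forall i c, I i c -> runs c e Q \/ (exists i', i = i'.+1 /\ runs c b (I i'))) ->
  forall i c, I i c -> runs c (i * b + e) Q.
Proof.
move=> H; elim=> [|i IH] c Hc.
  case: (H 0 c Hc) => [//|[i' [//]]].
case: (H _ c Hc) => [Hr|[i' [[<-] Hr]]].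
  by apply: runs_mono Hr; lia.
rewrite mulSn -addnA; apply: runs_seq Hr _ => c' Hc'; exact: IH.
Qed.

Lemma exec_run t c c' : exec t c = Some c' -> step P c' = None -> run P t.+1 c = Some c'.
Proof.
elim: t c => [|t IH] c.
  by move=> [<-] Hs; rewrite /= Hs.
rewrite [exec _ _]/=; case E: (step P c) => [c1|] // He Hs.
by rewrite [run _ _ _]/= E; apply: IH.
Qed.

End Exec.

Lemma upd_eq m a v x : x = a -> upd m a v x = v.
Proof. by move=> ->; rewrite /upd Z.eqb_refl. Qed.
Lemma upd_ne m a v x : x <> a -> upd m a v x = m x.
Proof. by move=> H; rewrite /upd; case: Z.eqb_spec. Qed.

Lemma touch_le us l S : us <= S -> all (fun a => sz a <= S) l -> touch us l <= S.
Proof.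
move=> Hu; elim: l => [|a l IH] //= /andP[Ha Hl].
by rewrite /touch /= geq_max Ha; apply: IH.
Qed.

Lemma touch_ge us l : us <= touch us l.
Proof. elim: l => [|a l IH] //=; rewrite /touch /=; exact: leq_trans IH (leq_maxr _ _). Qed.
Definition prog : program := [::
  (* 0 *) IAdd 2 2 1;
  (* 1 *) IAdd 2 2 1;
  (* 2 *) IAdd 2 2 1;
  (* 3 *) IStore 2 0;
  (* 4 *) IConst 0 (-1)%Z;
  (* 5 *) IStore 0 1;
  (* 6 *) ILoad 1 2;
  (* 7 *) IConst 0 (-2)%Z;
  (* 8 *) IStore 0 1;
  (* 9 *) IConst 0 (-1)%Z;
  (* 10 *) ILoad 1 0;
  (* 11 *) ISub 2 2 1;
  (* 12 *) ISub 2 2 1;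
  (* 13 *) ISub 2 2 1;
  (* 14 *) IConst 0 (-3)%Z;
  (* 15 *) IStore 0 2;
  (* 16 *) IJz 2 27;
  (* 17 *) IConst 1 (1)%Z;
  (* 18 *) ISub 2 2 1;
  (* 19 *) IConst 0 (-4)%Z;
  (* 20 *) IMul 1 0 2;
  (* 21 *) IAdd 1 1 0;
  (* 22 *) IConst 0 (3)%Z;
  (* 23 *) IAdd 0 0 2;
  (* 24 *) ILoad 0 0;
  (* 25 *) IStore 1 0;
  (* 26 *) IJmp 16;
  (* 27 *) IConst 0 (-2)%Z;
  (* 28 *) ILoad 3 0;
  (* 29 *) IConst 0 (-1)%Z;
  (* 30 *) ILoad 4 0;
  (* 31 *) IConst 0 (-3)%Z;
  (* 32 *) ILoad 5 0;
  (* 33 *) IConst 6 (0)%Z;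
  (* 34 *) IConst 8 (1)%Z;
  (* 35 *) IConst 11 (-4)%Z;
  (* 36 *) IMul 10 11 6;
  (* 37 *) IConst 11 (-5)%Z;
  (* 38 *) IAdd 10 10 11;
  (* 39 *) IStore 10 8;
  (* 40 *) IJlt 6 4 42;
  (* 41 *) IJmp 46;
  (* 42 *) IMul 8 8 3;
  (* 43 *) IConst 11 (1)%Z;
  (* 44 *) IAdd 6 6 11;
  (* 45 *) IJmp 35;
  (* 46 *) IConst 6 (1)%Z;
  (* 47 *) IJlt 6 5 49;
  (* 48 *) IJmp 77;
  (* 49 *) IConst 7 (0)%Z;
  (* 50 *) IAdd 10 6 7;
  (* 51 *) IJlt 10 5 53;
  (* 52 *) IJmp 69;
  (* 53 *) IConst 12 (-4)%Z;
  (* 54 *) IMul 11 12 7;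
  (* 55 *) IConst 12 (-4)%Z;
  (* 56 *) IAdd 11 11 12;
  (* 57 *) ILoad 11 11;
  (* 58 *) IConst 0 (-4)%Z;
  (* 59 *) IMul 12 0 10;
  (* 60 *) IConst 0 (-4)%Z;
  (* 61 *) IAdd 12 12 0;
  (* 62 *) ILoad 12 12;
  (* 63 *) ISub 11 11 12;
  (* 64 *) IJz 11 66;
  (* 65 *) IJmp 69;
  (* 66 *) IConst 11 (1)%Z;
  (* 67 *) IAdd 7 7 11;
  (* 68 *) IJmp 50;
  (* 69 *) IConst 11 (-4)%Z;
  (* 70 *) IMul 10 11 6;
  (* 71 *) IConst 11 (-6)%Z;
  (* 72 *) IAdd 10 10 11;
  (* 73 *) IStore 10 7;
  (* 74 *) IConst 11 (1)%Z;
  (* 75 *) IAdd 6 6 11;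
  (* 76 *) IJmp 47;
  (* 77 *) IConst 6 (1)%Z;
  (* 78 *) IConst 0 (0)%Z;
  (* 79 *) IJlt 6 5 82;
  (* 80 *) IAdd 9 5 0;
  (* 81 *) IJmp 83;
  (* 82 *) IAdd 9 6 0;
  (* 83 *) IConst 8 (0)%Z;
  (* 84 *) IConst 7 (1)%Z;
  (* 85 *) IAdd 10 7 7;
  (* 86 *) IJlt 6 10 124;
  (* 87 *) IConst 12 (-4)%Z;
  (* 88 *) IMul 11 12 7;
  (* 89 *) IConst 12 (-7)%Z;
  (* 90 *) IAdd 11 11 12;
  (* 91 *) ILoad 11 11;
  (* 92 *) IJlt 7 9 102;
  (* 93 *) ISub 12 6 10;
  (* 94 *) IConst 0 (-4)%Z;
  (* 95 *) IMul 12 0 12;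
  (* 96 *) IConst 0 (-5)%Z;
  (* 97 *) IAdd 12 12 0;
  (* 98 *) ILoad 12 12;
  (* 99 *) IMul 11 11 12;
  (* 100 *) IAdd 8 8 11;
  (* 101 *) IJmp 121;
  (* 102 *) ISub 12 6 7;
  (* 103 *) IJlt 12 9 113;
  (* 104 *) ISub 12 12 9;
  (* 105 *) IConst 0 (-4)%Z;
  (* 106 *) IMul 12 0 12;
  (* 107 *) IConst 0 (-5)%Z;
  (* 108 *) IAdd 12 12 0;
  (* 109 *) ILoad 12 12;
  (* 110 *) IMul 11 11 12;
  (* 111 *) IAdd 8 8 11;
  (* 112 *) IJmp 121;
  (* 113 *) IConst 0 (-4)%Z;
  (* 114 *) IMul 10 0 12;
  (* 115 *) IConst 0 (-6)%Z;
  (* 116 *) IAdd 10 10 0;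
  (* 117 *) ILoad 10 10;
  (* 118 *) ISub 12 9 12;
  (* 119 *) IJlt 10 12 121;
  (* 120 *) IAdd 8 8 11;
  (* 121 *) IConst 0 (1)%Z;
  (* 122 *) IAdd 7 7 0;
  (* 123 *) IJmp 85;
  (* 124 *) ISub 10 6 9;
  (* 125 *) IConst 0 (-4)%Z;
  (* 126 *) IMul 10 0 10;
  (* 127 *) IConst 0 (-5)%Z;
  (* 128 *) IAdd 10 10 0;
  (* 129 *) ILoad 10 10;
  (* 130 *) ISub 10 10 8;
  (* 131 *) IConst 0 (-4)%Z;
  (* 132 *) IMul 11 0 6;
  (* 133 *) IConst 0 (-7)%Z;
  (* 134 *) IAdd 11 11 0;
  (* 135 *) IStore 11 10;
  (* 136 *) IJlt 6 4 138;
  (* 137 *) IJmp 141;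
  (* 138 *) IConst 0 (1)%Z;
  (* 139 *) IAdd 6 6 0;
  (* 140 *) IJmp 78;
  (* 141 *) IConst 1 (0)%Z;
  (* 142 *) IAdd 0 8 1;
  (* 143 *) IHalt].

Lemma touch1 us a S : us <= S -> sz a <= S -> touch us [:: a] <= S.
Proof. by move=> H1 H2; apply: touch_le => //=; rewrite H2. Qed.
Lemma touch2 us a b S : us <= S -> sz a <= S -> sz b <= S -> touch us [:: a; b] <= S.
Proof. by move=> H1 H2 H3; apply: touch_le => //=; rewrite H2 H3. Qed.
Lemma touch3 us a b c S : us <= S -> sz a <= S -> sz b <= S -> sz c <= S -> touch us [:: a; b; c] <= S.
Proof. by move=> H1 H2 H3 H4; apply: touch_le => //=; rewrite H2 H3 H4. Qed.

Arguments touch : simpl never.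
Arguments upd : simpl never.

Ltac rd1 := match goal with |- context [upd ?m ?a ?v ?x] =>
   first [ rewrite (@upd_eq m a v x); [|reflexivity] | rewrite (@upd_ne m a v x); [|discriminate]
         | rewrite (@upd_eq m a v x); [|lia] | rewrite (@upd_ne m a v x); [|lia] ] end.
Ltac rd := repeat rd1.
Ltac rdh m := repeat match goal with H : m ?a = _ |- context [m ?a] => rewrite H end.
Ltac stp m := eapply runs_step; [reflexivity|]; cbn -[Z.add Z.sub Z.mul Z.div Z.modulo Z.eqb Z.ltb Z.succ upd touch]; rd; rdh m.
Ltac br := match goal with
  | |- context [if Z.ltb ?a ?b then _ else _] => destruct (Z.ltb_spec a b)
  | |- context [if Z.eqb ?a ?b then _ else _] => destruct (Z.eqb_spec a b) end.

Notation A off i := (-4 * Z.of_nat i + off)%Z.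
Definition At pc (R : (Z -> Z) -> nat -> Prop) (c : config) := cpc c = pc /\ R (cmem c) (cused c).

Ltac sp := repeat first [apply: touch1 | apply: touch2 | apply: touch3]; try unfold sz; lia.


Section Prog.
Variables (k n : nat) (u : seq nat).
Hypotheses (Hn : 0 < n) (Hk : 1 < k) (Hun : size u <= n) (Hv : valid k u).
Local Notation L := (size u).
Local Notation SP := (4 * n + 40).

Lemma im0 : init_mem k n u 0 = Z.of_nat k. Proof. by []. Qed.
Lemma im1 : init_mem k n u 1 = Z.of_nat n. Proof. by []. Qed.
Lemma im2 : init_mem k n u 2 = Z.of_nat L. Proof. by []. Qed.
Lemma imu j : j < L -> init_mem k n u (3 + Z.of_nat j) = Z.of_nat (nth 0 u j).
Proof.
move=> Hj; rewrite /init_mem.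
have -> : Z.eqb (3 + Z.of_nat j) 0 = false by apply/Z.eqb_neq; lia.
have -> : Z.eqb (3 + Z.of_nat j) 1 = false by apply/Z.eqb_neq; lia.
have -> : Z.eqb (3 + Z.of_nat j) 2 = false by apply/Z.eqb_neq; lia.
have -> : Z.leb 3 (3 + Z.of_nat j) = true by apply/Z.leb_le; lia.
have -> : Z.ltb (3 + Z.of_nat j) (3 + Z.of_nat L) = true by apply/Z.ltb_lt; lia.
by rewrite /= (_ : (3 + Z.of_nat j - 3)%Z = Z.of_nat j) ?Nat2Z.id //; lia.
Qed.

Definition Icopy i (M : Z -> Z) (us : nat) :=
  M 2%Z = Z.of_nat i /\ i <= L /\ M (-1)%Z = Z.of_nat n /\ M (-2)%Z = Z.of_nat k /\ M (-3)%Z = Z.of_nat L /\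
      (forall j, j < i -> M (3 + Z.of_nat j)%Z = Z.of_nat (nth 0 u j)) /\
      (forall j, i <= j < L -> M (A (-4) j) = Z.of_nat (nth 0 u j)) /\ us <= SP.


Local Notation UA M := (forall j, j < L -> M (A (-4) j) = Z.of_nat (nth 0 u j)).
Local Notation PWA e M := (forall i, i < e -> M (A (-5) i) = Z.of_nat (k ^ i)).
Local Notation ZAA d M := (forall d', 0 < d' < d -> M (A (-6) d') = Z.of_nat (lcp u (drop d' u))).
Local Notation HA m M := (forall j, 0 < j < m -> M (A (-7) j) = Z.of_nat (Hm k u j)).

Definition Ipw e (M : Z -> Z) (us : nat) :=
  M 3%Z = Z.of_nat k /\ M 4%Z = Z.of_nat n /\ M 5%Z = Z.of_nat L /\ M 6%Z = Z.of_nat e /\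
  M 8%Z = Z.of_nat (k ^ e) /\ e <= n /\ UA M /\ PWA e M /\ us <= SP.

Definition Izd d (M : Z -> Z) (us : nat) :=
  M 3%Z = Z.of_nat k /\ M 4%Z = Z.of_nat n /\ M 5%Z = Z.of_nat L /\ M 6%Z = Z.of_nat d /\
  0 < d /\ d <= maxn 1 L /\ UA M /\ PWA n.+1 M /\ ZAA d M /\ us <= SP.

Definition Izz d z (M : Z -> Z) (us : nat) :=
  Izd d M us /\ d < L /\ M 7%Z = Z.of_nat z /\ d + z <= L /\ z <= lcp u (drop d u).

Definition Iml m (M : Z -> Z) (us : nat) :=
  M 3%Z = Z.of_nat k /\ M 4%Z = Z.of_nat n /\ M 5%Z = Z.of_nat L /\ M 6%Z = Z.of_nat m /\
  0 < m <= n /\ UA M /\ PWA n.+1 M /\ ZAA L M /\ HA m M /\ us <= SP.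

Definition Imj m j (M : Z -> Z) (us : nat) :=
  Iml m M us /\ M 9%Z = Z.of_nat (minn m L) /\ M 7%Z = Z.of_nat j /\ 0 < j <= m./2 + 1 /\
  M 8%Z = Z.of_nat (\sum_(1 <= j' < j) term k u m j').

Definition Fin (M : Z -> Z) (us : nat) := M 0%Z = Z.of_nat (B k u n) /\ us <= SP.

Ltac fin' := split; [reflexivity|]; cbn [cmem cused];
  unfold Imj, Izz; unfold Izd, Iml, Ipw, Icopy, Fin;
  repeat match goal with |- _ /\ _ => split end.
Ltac fin := apply: runs_done; fin'.

Lemma blk0 : runs prog (init_config k n u) 16 (At 16 (Icopy L)).
Proof.
rewrite /init_config.
set m := init_mem k n u.
have H0 : m 0%Z = Z.of_nat k by [].
have H1 : m 1%Z = Z.of_nat n by [].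
have H2 : m 2%Z = Z.of_nat L by [].
do 16 stp m.
fin; rd; rdh m; try lia.
- move=> j Hj; rd. exact: imu.
- sp.
Qed.

Ltac rdq M a H := match goal with |- context [M ?x] =>
   let E := fresh in assert (E : x = a) by lia; (try rewrite E); rewrite H; clear E end.

Lemma copy_body i M us : Icopy i.+1 M us ->
  runs prog (Config 16 M us) 11 (At 16 (Icopy i)).
Proof.
move=> [H2 [Hi [Hm1 [Hm2 [Hm3 [Hc [Hu Hus]]]]]]].
rewrite Nat2Z.inj_succ in H2.
stp M. br; first lia.
do 8 stp M.
rdq M (3 + Z.of_nat i)%Z Hc; last lia.
do 2 stp M.
fin; rd; rdh M; try lia.
- move=> j Hj; rd; rewrite Hc; lia.
- move=> j Hj.
  have [->|Hne] := eqVneq j i; rd; rewrite ?Hu //; lia.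
- sp.
Qed.

Lemma copy_exit M us : Icopy 0 M us -> runs prog (Config 16 M us) 9 (At 35 (Ipw 0)).
Proof.
move=> [H2 [_ [Hm1 [Hm2 [Hm3 [_ [Hu Hus]]]]]]].
stp M. br; last lia.
do 8 stp M.
fin; rd; rdh M; try lia.
- move=> j Hj; rd; apply: Hu; lia.
- sp.
Qed.

Lemma pw_body e M us : Ipw e M us -> e < n -> runs prog (Config 35 M us) 10 (At 35 (Ipw e.+1)).
Proof.
move=> [H3 [H4 [H5 [H6 [H8 [He [Hu [Hp Hus]]]]]]]] Hen.
do 6 stp M. br; last lia.
do 4 stp M.
fin; rd; rdh M; try lia.
- by rewrite expnS Nat2Z.inj_mul; lia.
- move=> j Hj; rd; apply: Hu; lia.
- move=> i Hi; have [->|Hne] := eqVneq i e; rd => //; apply: Hp; lia.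
- sp.
Qed.

Lemma pw_exit M us : Ipw n M us -> runs prog (Config 35 M us) 8 (At 47 (Izd 1)).
Proof.
move=> [H3 [H4 [H5 [H6 [H8 [He [Hu [Hp Hus]]]]]]]].
do 6 stp M. br; first lia.
do 2 stp M.
fin; rd; rdh M; try lia.
- move=> j Hj; rd; apply: Hu; lia.
- move=> i Hi; have [->|Hne] := eqVneq i n; rd => //; apply: Hp; lia.
- sp.
Qed.

Lemma za_enter d M us : Izd d M us -> d < L -> runs prog (Config 47 M us) 2 (At 50 (Izz d 0)).
Proof.
move=> [H3 [H4 [H5 [H6 [Hd0 [Hd1 [Hu [Hp [Hz Hus]]]]]]]]] HdL.
stp M. br; last lia.
stp M.
fin; rd; rdh M; try lia.
- move=> j Hj; rd; apply: Hu; lia.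
- move=> j Hj; rd; apply: Hp; lia.
- move=> j Hj; rd; apply: Hz; lia.
- sp.
Qed.

Lemma za_exit d M us : Izd d M us -> L <= d -> runs prog (Config 47 M us) 3 (At 78 (Iml 1)).
Proof.
move=> [H3 [H4 [H5 [H6 [Hd0 [Hd1 [Hu [Hp [Hz Hus]]]]]]]]] HdL.
stp M. br; first lia.
do 2 stp M.
fin; rd; rdh M; try lia.
- move=> j Hj; rd; apply: Hu; lia.
- move=> j Hj; rd; apply: Hp; lia.
- move=> j Hj; rd; apply: Hz; lia.
- sp.
Qed.

Lemma zz_body d z M us : Izz d z M us -> d + z < L -> nth 0 u z = nth 0 u (d + z) ->
  runs prog (Config 50 M us) 17 (At 50 (Izz d z.+1)).
Proof.
move=> [[H3 [H4 [H5 [H6 [Hd0 [Hd1 [Hu [Hp [Hz Hus]]]]]]]]] [HdL [H7 [Hdz Hlcp]]]] Hlt Heq.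
do 2 stp M. br; last lia.
do 5 stp M.
rdq M (A (-4) z) Hu; last lia.
do 5 stp M.
rdq M (A (-4) (d + z)) Hu; last lia.
do 2 stp M. br; last lia.
do 3 stp M.
fin; rd; rdh M; try lia.
- move=> j Hj; rd; apply: Hu; lia.
- move=> j Hj; rd; apply: Hp; lia.
- move=> j Hj; rd; apply: Hz; lia.
- sp.
- exact: lcp_step.
Qed.

Lemma zz_exit1 d z M us : Izz d z M us -> L <= d + z ->
  runs prog (Config 50 M us) 11 (At 47 (Izd d.+1)).
Proof.
move=> [[H3 [H4 [H5 [H6 [Hd0 [Hd1 [Hu [Hp [Hz Hus]]]]]]]]] [HdL [H7 [Hdz Hlcp]]]] Hge.
do 2 stp M. br; first lia.
do 9 stp M.
fin; rd; rdh M; try lia.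
- move=> j Hj; rd; apply: Hu; lia.
- move=> j Hj; rd; apply: Hp; lia.
- move=> j Hj; have [->|Hne] := eqVneq j d; rd.
    by rewrite (@lcp_end1 u d z) //; lia.
  apply: Hz; lia.
- sp.
Qed.

Lemma zz_exit2 d z M us : Izz d z M us -> d + z < L -> nth 0 u z <> nth 0 u (d + z) ->
  runs prog (Config 50 M us) 23 (At 47 (Izd d.+1)).
Proof.
move=> [[H3 [H4 [H5 [H6 [Hd0 [Hd1 [Hu [Hp [Hz Hus]]]]]]]]] [HdL [H7 [Hdz Hlcp]]]] Hlt Hne.
do 2 stp M. br; last lia.
do 5 stp M.
rdq M (A (-4) z) Hu; last lia.
do 5 stp M.
rdq M (A (-4) (d + z)) Hu; last lia.
do 2 stp M. br; first lia.
do 9 stp M.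
fin; rd; rdh M; try lia.
- move=> j Hj; rd; apply: Hu; lia.
- move=> j Hj; rd; apply: Hp; lia.
- move=> j Hj; have [->|Hne'] := eqVneq j d; rd.
    by rewrite (@lcp_end2 u d z) //; lia.
  apply: Hz; lia.
- sp.
Qed.

Lemma ml_enter m M us : Iml m M us -> runs prog (Config 78 M us) 6 (At 85 (Imj m 1)).
Proof.
move=> [H3 [H4 [H5 [H6 [Hm [Hu [Hp [Hz [Hh Hus]]]]]]]]].
do 2 stp M. br.
- do 3 stp M.
  fin; rd; rdh M; try lia.
  + move=> j Hj; rd; apply: Hu; lia.
  + move=> j Hj; rd; apply: Hp; lia.
  + move=> j Hj; rd; apply: Hz; lia.
  + move=> j Hj; rd; apply: Hh; lia.
  + sp.
  + by rewrite big_geq.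
- do 4 stp M.
  fin; rd; rdh M; try lia.
  + move=> j Hj; rd; apply: Hu; lia.
  + move=> j Hj; rd; apply: Hp; lia.
  + move=> j Hj; rd; apply: Hz; lia.
  + move=> j Hj; rd; apply: Hh; lia.
  + sp.
  + by rewrite big_geq.
Qed.

Lemma term1 m j : minn m L <= j -> term k u m j = Hm k u j * k ^ (m - 2 * j).
Proof. by move=> H; rewrite /term /= H. Qed.
Lemma term2 m j : j < minn m L -> minn m L <= m - j ->
  term k u m j = Hm k u j * k ^ (m - j - minn m L).
Proof. by move=> H1 H2; rewrite /term /= leqNgt H1 /= H2. Qed.
Lemma term3 m j : j < minn m L -> m - j < minn m L ->
  term k u m j = if minn m L - (m - j) <= lcp u (drop (m - j) u) then Hm k u j else 0.
Proof.
move=> H1 H2; rewrite /term /= leqNgt H1 /= leqNgt H2 /= ovl_lcp //; lia.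
Qed.
Lemma sum_step m j : 0 < j ->
  \sum_(1 <= j' < j.+1) term k u m j' = \sum_(1 <= j' < j) term k u m j' + term k u m j.
Proof. by move=> Hj; rewrite big_nat_recr. Qed.

Lemma mj_body m j M us : Imj m j M us -> 2 * j <= m ->
  runs prog (Config 85 M us) 22 (At 85 (Imj m j.+1)).
Proof.
move=> [[H3 [H4 [H5 [H6 [Hm [Hu [Hp [Hz [Hh Hus]]]]]]]]] [H9 [H7 [Hj H8]]]] H2j.
do 2 stp M. br; first lia.
do 5 stp M.
rdq M (A (-7) j) Hh; last lia.
stp M. br.
- do 2 stp M. br.
  + do 5 stp M.
    rdq M (A (-6) (m - j)) Hz; last lia.
    do 2 stp M. br.
    * do 3 stp M.
      fin; rd; rdh M; try lia.
      -- move=> i Hi; rd; apply: Hu; lia.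
      -- move=> i Hi; rd; apply: Hp; lia.
      -- move=> i Hi; rd; apply: Hz; lia.
      -- move=> i Hi; rd; apply: Hh; lia.
      -- sp.
      -- rewrite sum_step; last lia.
         rewrite (@term3 m j); [|lia|lia].
         case: leqP => Hc; lia.
    * do 4 stp M.
      fin; rd; rdh M; try lia.
      -- move=> i Hi; rd; apply: Hu; lia.
      -- move=> i Hi; rd; apply: Hp; lia.
      -- move=> i Hi; rd; apply: Hz; lia.
      -- move=> i Hi; rd; apply: Hh; lia.
      -- sp.
      -- rewrite sum_step; last lia.
         rewrite (@term3 m j); [|lia|lia].
         case: leqP => Hc; lia.
  + do 6 stp M.
    rdq M (A (-5) (m - j - minn m L)) Hp; last lia.
    do 6 stp M.
    fin; rd; rdh M; try lia.
    * move=> i Hi; rd; apply: Hu; lia.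
    * move=> i Hi; rd; apply: Hp; lia.
    * move=> i Hi; rd; apply: Hz; lia.
    * move=> i Hi; rd; apply: Hh; lia.
    * sp.
    * rewrite sum_step; last lia.
      rewrite (@term2 m j); [|lia|lia].
      rewrite Nat2Z.inj_add Nat2Z.inj_mul; lia.
- do 6 stp M.
  rdq M (A (-5) (m - 2 * j)) Hp; last lia.
  do 6 stp M.
  fin; rd; rdh M; try lia.
  + move=> i Hi; rd; apply: Hu; lia.
  + move=> i Hi; rd; apply: Hp; lia.
  + move=> i Hi; rd; apply: Hz; lia.
  + move=> i Hi; rd; apply: Hh; lia.
  + sp.
  + rewrite sum_step; last lia.
    rewrite (@term1 m j); last lia.
    rewrite Nat2Z.inj_add Nat2Z.inj_mul; lia.
Qed.

Lemma half_bounds m : m./2 * 2 <= m /\ m < m./2 * 2 + 2.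
Proof. have := odd_double_half m; rewrite -muln2; case: (odd m) => /= H; lia. Qed.

Lemma sum_G m : \sum_(1 <= j' < m./2 + 1) term k u m j' = Gm k u m.
Proof. by rewrite G_rec // /index_iota addnK. Qed.

Lemma mj_exit m j M us : Imj m j M us -> m < 2 * j ->
  runs prog (Config 85 M us) 18
    (fun c => (m < n /\ At 78 (Iml m.+1) c) \/ (m = n /\ At 143 Fin c)).
Proof.
move=> [[H3 [H4 [H5 [H6 [Hm0 [Hu [Hp [Hz [Hh Hus]]]]]]]]] [H9 [H7 [Hj H8]]]] H2j.
have Ej : j = m./2 + 1 by have := half_bounds m; lia.
rewrite Ej sum_G in H8.
have HG := @Gm_le k u m Hv.
do 2 stp M. br; last lia.
do 6 stp M.
rdq M (A (-5) (m - minn m L)) Hp; last lia.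
do 7 stp M. br.
- do 3 stp M.
  apply: runs_done; left; split; first lia.
  fin'; rd; rdh M; try lia.
  + move=> i Hi; rd; apply: Hu; lia.
  + move=> i Hi; rd; apply: Hp; lia.
  + move=> i Hi; rd; apply: Hz; lia.
  + move=> i Hi; have [->|Hne] := eqVneq i m; rd.
      by rewrite /Hm Nat2Z.inj_sub //; apply/leP.
    apply: Hh; lia.
  + sp.
- do 3 stp M.
  apply: runs_done; right; split; first lia.
  have Emn : m = n by lia.
  fin'; rd; rdh M; try lia.
  + rewrite B_Gm //; [rewrite -Emn; lia | lia].
  + sp.
Qed.

Lemma atE pc R c : At pc R c -> exists M us, c = Config pc M us /\ R M us.
Proof. by case: c => pc' M us [/= -> H]; exists M, us. Qed.

Lemma copy_loop : runs prog (init_config k n u) (16 + (L * 11 + 9)) (At 35 (Ipw 0)).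
Proof.
apply: runs_seq blk0 _ => c Hc.
apply: (@runs_loop _ (fun i c => At 16 (Icopy i) c)) Hc => -[|i] c' /atE [M [us [-> H]]].
  by left; apply: copy_exit.
by right; exists i; split => //; apply: copy_body.
Qed.

Lemma pw_loop c : At 35 (Ipw 0) c -> runs prog c (n * 10 + 8) (At 47 (Izd 1)).
Proof.
move=> Hc.
apply: (@runs_loop _ (fun i c => i <= n /\ At 35 (Ipw (n - i)) c)); last by rewrite subnn.
move=> [|i] c' [Hi /atE [M [us [-> H]]]].
  by left; apply: pw_exit; rewrite subn0 in H.
right; exists i; split => //.
have E : (n - i.+1).+1 = n - i by lia.
apply: runs_impl (pw_body H _); last lia.
by move=> c2; rewrite E => H2; split => //; lia.
Qed.

Lemma zz_loop d c : d < L -> At 50 (Izz d 0) c -> runs prog c (n * 17 + 23) (At 47 (Izd d.+1)).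
Proof.
move=> HdL Hc.
apply: (runs_mono (T := (L - d - 0) * 17 + 23)); first lia.
apply: (@runs_loop _ (fun i c => exists z, i = L - d - z /\ At 50 (Izz d z) c)); last by exists 0.
move=> i c' [z [-> /atE [M [us [-> H]]]]].
have [_ [_ [_ [Hdz _]]]] := H.
case: (leqP L (d + z)) => H1.
  by left; apply: runs_mono (zz_exit1 H H1).
case: (eqVneq (nth 0 u z) (nth 0 u (d + z))) => H2.
  right; exists (L - d - z.+1); split; first lia.
  apply: runs_impl (zz_body H H1 H2) => c2 Hc2; exists z.+1; split => //.
by left; apply: zz_exit2 H H1 (elimN eqP H2).
Qed.

Lemma za_loop c : At 47 (Izd 1) c -> runs prog c ((maxn 1 L - 1) * (2 + (n * 17 + 23)) + 3) (At 78 (Iml 1)).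
Proof.
move=> Hc.
apply: (@runs_loop _ (fun i c => exists d, i = maxn 1 L - d /\ At 47 (Izd d) c)); last by exists 1.
move=> i c' [d [-> /atE [M [us [-> H]]]]].
have [_ [_ [_ [_ [Hd0 [Hd1 _]]]]]] := H.
case: (leqP L d) => H1.
  by left; apply: za_exit H H1.
right; exists (maxn 1 L - d.+1); split; first lia.
apply: runs_seq (za_enter H H1) _ => c2 Hc2.
apply: runs_impl (zz_loop H1 Hc2) => c3 Hc3; exists d.+1; split => //.
Qed.

Lemma mj_loop m c : Iml m (cmem c) (cused c) -> cpc c = 78 ->
  runs prog c (6 + (n * 22 + 18))
    (fun c => (m < n /\ At 78 (Iml m.+1) c) \/ (m = n /\ At 143 Fin c)).
Proof.
case: c => pc M us /= H Hpc; subst pc.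
have [_ [_ [_ [_ [Hm _]]]]] := H.
apply: runs_seq (ml_enter H) _ => c Hc.
apply: (runs_mono (T := (m./2 + 1 - 1) * 22 + 18)); first by have := half_bounds m; lia.
apply: (@runs_loop _ (fun i c => exists j, i = m./2 + 1 - j /\ At 85 (Imj m j) c)); last by exists 1.
move=> i c' [j [-> /atE [M' [us' [-> H']]]]].
have [_ [_ [_ [Hj _]]]] := H'.
case: (leqP (2 * j) m) => H1.
  right; exists (m./2 + 1 - j.+1); split; first by have := half_bounds m; lia.
  apply: runs_impl (mj_body H' H1) => c2 Hc2; exists j.+1; split => //.
by left; apply: mj_exit H' H1.
Qed.

Lemma main_loop c : At 78 (Iml 1) c ->
  runs prog c ((n - 1) * (6 + (n * 22 + 18)) + (6 + (n * 22 + 18))) (At 143 Fin).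
Proof.
move=> Hc.
apply: (@runs_loop _ (fun i c => exists m, i = n - m /\ At 78 (Iml m) c)); last by exists 1.
move=> i c' [m [-> [Hpc H]]].
have [_ [_ [_ [_ [Hm _]]]]] := H.
case: (ltnP m n) => H1.
  right; exists (n - m.+1); split; first lia.
  apply: runs_impl (mj_loop H Hpc) => c2 [[_ H2]|[E _]]; last lia.
  by exists m.+1.
left; apply: runs_impl (mj_loop H Hpc) => c2 [[E _]|[_ H2]] //; lia.
Qed.

Lemma whole : runs prog (init_config k n u)
  ((16 + (L * 11 + 9)) + ((n * 10 + 8) + (((maxn 1 L - 1) * (2 + (n * 17 + 23)) + 3) +
   ((n - 1) * (6 + (n * 22 + 18)) + (6 + (n * 22 + 18)))))) (At 143 Fin).
Proof.
apply: runs_seq copy_loop _ => c1 H1.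
apply: runs_seq (pw_loop H1) _ => c2 H2.
apply: runs_seq (za_loop H2) _ => c3 H3.
exact: main_loop.
Qed.

End Prog.

Theorem theorem6 :
  exists (P : program) (C : nat),
    forall (k n : nat) (u : seq nat),
      1 <= n -> 2 <= k -> size u <= n ->
      all (fun a => (1 <= a) && (a <= k)) u ->
      exists (t : nat) (c : config),
        [/\ t <= C * (n * n),
            run P t (init_config k n u) = Some c,
            cused c <= C * n &
            cmem c 0%Z = Z.of_nat (B k u n)].
Proof.
exists prog, 200 => k n u Hn Hk Hun Hv.
have [t [c [Ht [He [Hpc [HM Hus]]]]]] := @whole k n u Hn Hk Hun Hv.
exists t.+1, c; split.
- have H1 : maxn 1 (size u) - 1 <= n by lia.
  have H2 : (maxn 1 (size u) - 1) * (2 + (n * 17 + 23)) <= n * (2 + (n * 17 + 23)) by apply: leq_mul.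
  have H3 : (n - 1) * (6 + (n * 22 + 18)) <= n * (6 + (n * 22 + 18)) by apply: leq_mul => //; lia.
  nia.
- apply: exec_run He _.
  by case: c Hpc {HM Hus} => pc M us /= ->.
- lia.
- exact: HM.
Qed.
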